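(* Let $\mathcal Z,\mathcal S$ be finite, $f:\mathcal Z\times\mathcal S\to\mathbb R$, and $(Z_i,S_i)$, $i=1,\dots,n$, random variables with a common joint law $P_{ZS}$ (not depending on $i$) such that $\Pr[\mathbf S=\mathbf s\mid\mathbf Z=\mathbf z]=\prod_{i=1}^n\Pr[S_i=s_i\mid Z_i=z_i]$. Suppose there are reals $a<b$ such that for every $z$ with $P_Z(z)>0$ and every $s$ with $P_{S|Z}(s|z)>0$, $a\le f(z,s)-\mathbb E_{S\sim P_{S|Z}(\cdot|z)}[f(z,S)]\le b$. Then for every type $p$ with $\Pr[\hat p_{\mathbf Z}=p]>0$ and every $\xi>0$, $$\Pr\Big[\Big|\sum_{i=1}^n f(Z_i,S_i)-\mu\Big|\ge\xi\ \Big|\ \hat p_{\mathbf Z}=p\Big]\le 2e^{-\frac{\xi^2}{n(b-a)^2}},$$ where $\mu=\mathbb E\big[\sum_{i=1}^n f(Z_i,S_i)\mid\hat p_{\mathbf Z}=p\big]$.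
   Context: $\mathbf Z=(Z_1,\dots,Z_n)$, $\mathbf S=(S_1,\dots,S_n)$; $\hat p_{\mathbf Z}$ is the empirical distribution (type) of $\mathbf Z$; $P_{S|Z}$ is the conditional of $P_{ZS}$. *)

(* Defs.v *)
From HB Require Import structures.
From mathcomp Require Import all_boot all_order all_algebra.
From mathcomp Require Import reals.
From mathcomp.analysis Require Import sequences exp.
Set Implicit Arguments. Unset Strict Implicit. Unset Printing Implicit Defensive.
Import Order.TTheory GRing.Theory Num.Theory.
Local Open Scope ring_scope.

Definition is_pmf (R : realType) (Omega : finType) (P : Omega -> R) : Prop :=
  (forall w, 0 <= P w) /\ \sum_(w : Omega) P w = 1.

Definition Pr (R : realType) (Omega : finType) (P : Omega -> R) (E : pred Omega) : R :=
  \sum_(w : Omega | E w) P w.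

Definition cPr (R : realType) (Omega : finType) (P : Omega -> R) (E C : pred Omega) : R :=
  Pr P (predI E C) / Pr P C.

Definition cExp (R : realType) (Omega : finType) (P : Omega -> R) (X : Omega -> R)
    (C : pred Omega) : R :=
  (\sum_(w : Omega | C w) P w * X w) / Pr P C.

Definition rvec (Omega : finType) (T : Type) (n : nat) (X : 'I_n -> Omega -> T)
    (w : Omega) : {ffun 'I_n -> T} := [ffun i => X i w].

Definition emp (R : realType) (T : finType) (n : nat) (z : {ffun 'I_n -> T})
  : {ffun T -> R} := [ffun a => #|[set i | z i == a]|%:R / n%:R].

Definition margZ (R : realType) (Zt St : finType) (PZS : Zt -> St -> R) (z : Zt) : R :=
  \sum_(s : St) PZS z s.

Definition condSZ (R : realType) (Zt St : finType) (PZS : Zt -> St -> R)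
    (s : St) (z : Zt) : R :=
  PZS z s / margZ PZS z.

(* Main.v *)
Require Import Defs.
From HB Require Import structures.
From mathcomp Require Import all_boot all_order all_algebra.
From mathcomp Require Import reals.
From mathcomp.analysis Require Import sequences exp.
Import Order.TTheory GRing.Theory Num.Theory.
Local Open Scope ring_scope.
From mathcomp Require Import ring lra.
Lemma le_eqVlt_eq (R : realType) (x y : R) : x = y -> x <= y.
Proof. by move->. Qed.

Section Ana.
Variable R : realType.

Lemma expR_ge_lin (m x : R) : expR m * (1 + (x - m)) <= expR x.
Proof.
have -> : expR x = expR m * expR (x - m) by rewrite -expRD addrC subrK.
by rewrite ler_pM2l ?expR_gt0 // expR_ge1Dx.
Qed.

Lemma cvx (t u v : R) : 0 <= t <= 1 ->
  expR (t * u + (1 - t) * v) <= t * expR u + (1 - t) * expR v.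
Proof.
move=> /andP[t0 t1]; set m := t * u + (1 - t) * v.
have hu := expR_ge_lin m u; have hv := expR_ge_lin m v.
have e0 := expR_gt0 m.
have : t * (expR m * (1 + (u - m))) + (1 - t) * (expR m * (1 + (v - m)))
   = expR m by rewrite /m; ring.
have h1 : t * (expR m * (1 + (u - m))) <= t * expR u by rewrite ler_wpM2l.
have h2 : (1 - t) * (expR m * (1 + (v - m))) <= (1 - t) * expR v.
  by rewrite ler_wpM2l // subr_ge0.
lra.
Qed.

Definition GG (th y : R) := 1 - th + th * expR y.
Lemma tilt (th x d : R) : 0 <= th <= 1 ->
  GG th x <= GG th (x - d) * expR (d * (th * expR x / GG th x)).
Proof.
move=> /andP[t0 t1]; set G := GG th.
have ex := expR_gt0 x.
have Gp : 0 < G x.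
  rewrite /G /GG; nra.
set tx := th * expR x / G x.
have tx0 : 0 <= tx by rewrite /tx divr_ge0 // ?mulr_ge0 // ltW.
have tx1 : tx <= 1.
  rewrite /tx ler_pdivrMr // mul1r /G /GG; lra.
have := @cvx tx (-d) 0; rewrite tx0 tx1 => /(_ isT) key.
have eG : G (x - d) = G x * (tx * expR (- d) + (1 - tx) * expR 0).
  rewrite /tx /G /GG expR0 expRB mulr1 expRN.
  by field; rewrite ?gt_eqF // expR_gt0.
rewrite eG.
suff : G x * 1 <= G x * ((tx * expR (- d) + (1 - tx) * expR 0) * expR (d * tx)).
  by rewrite mulr1 mulrA.
rewrite ler_pM2l //.
have e1 : expR (tx * - d + (1 - tx) * 0) * expR (d * tx) = 1.
  by rewrite -expRD mulr0 addr0 mulrN mulrC addNr expR0.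
apply: le_trans (_ : expR (tx * - d + (1 - tx) * 0) * expR (d * tx) <= _).
  by rewrite e1.
by rewrite ler_pM2r ?expR_gt0.
Qed.

Lemma thbound (th x : R) : 0 <= th <= 1 -> 0 <= x ->
  th * expR x / GG th x <= th + x / 3.
Proof.
move=> /andP[t0 t1] x0.
set w := expR (x / 4).
have eu : expR x = w ^+ 4 by rewrite /w -expRM_natl; congr expR; field.
have w1 : 1 <= w.
  by rewrite /w; apply: le_trans (expR_ge1Dx _); rewrite lerDl divr_ge0.
have xw : 4 * (w - 1) <= x * w.
  have h := expR_ge1Dx (- (x / 4)).
  rewrite expRN -/w in h.
  have wp : 0 < w by exact: (lt_le_trans ltr01 w1).
  have : w * (1 + - (x / 4)) <= w * w^-1 by rewrite ler_pM2l.
  rewrite mulfV ?gt_eqF //; lra.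
have Gp : 0 < GG th x by rewrite /GG; have := expR_gt0 x; nra.
rewrite ler_pdivrMr //.
rewrite /GG eu.
set v := w ^+ 2.
have ev : w ^+ 4 = v * v by rewrite /v -exprD.
rewrite ev.
set T := th * (1 - th).
have T0 : 0 <= T by rewrite /T mulr_ge0 // subr_ge0.
have hG : T * (1 + v) ^+ 2 <= 1 - th + th * (v * v).
  have : 0 <= ((1 - th) - th * v) ^+ 2 by rewrite sqr_ge0.
  rewrite /T; nra.
have hw : 3 * (v - 1) <= x * (1 + v).
  have : (w - 1) * (w ^+ 2 - 3 * w + 4) >= 0.
    apply: mulr_ge0; first by rewrite subr_ge0.
    have : 0 <= (w - 3/2) ^+ 2 by rewrite sqr_ge0.
    nra.
  rewrite /v => h.
  have wp : 0 < w by exact: (lt_le_trans ltr01 w1).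
  suff : 3 * (w ^+ 2 - 1) * w <= x * (1 + w ^+ 2) * w by rewrite ler_pM2r.
  nra.
have v1 : 1 <= v by rewrite /v; nra.
have : 3 * T * (v - 1) * (v + 1) <= x * T * (1 + v) ^+ 2.
  have : 0 <= T * (1 + v) by rewrite mulr_ge0 //; lra.
  nra.
have : x * T * (1 + v) ^+ 2 <= x * (1 - th + th * (v * v)) by nra.
rewrite /T; nra.
Qed.

Lemma bern_pos (th h : R) : 0 <= th <= 1 -> 0 <= h ->
  GG th h <= expR (th * h + h ^+ 2 / 4).
Proof.
move=> th01 h0.
have t1 := @tilt th h (h / 2) th01.
have t2 := @tilt th (h / 2) (h / 2) th01.
have e1 : h - h / 2 = h / 2 by field.
have e2 : h / 2 - h / 2 = 0 by rewrite subrr.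
rewrite e1 in t1; rewrite e2 in t2.
have G0 : GG th 0 = 1 by rewrite /GG expR0 mulr1 subrK.
rewrite G0 mul1r in t2.
have b1 := @thbound th h th01 h0.
have b2 := @thbound th (h / 2) th01 (divr_ge0 h0 (ler0n _ 2)).
have Gp : 0 < GG th (h / 2).
  case/andP: th01 => ? ?; rewrite /GG; have := expR_gt0 (h / 2); nra.
apply: (le_trans t1).
apply: le_trans (_ : expR (h / 2 * (th * expR (h / 2) / GG th (h / 2))) *
   expR (h / 2 * (th * expR h / GG th h)) <= _).
  by rewrite ler_pM2r ?expR_gt0.
rewrite -expRD ler_expR.
have hh : 0 <= h / 2 by rewrite divr_ge0.
have := ler_wpM2l hh b1; have := ler_wpM2l hh b2.
move=> c1 c2.
have : h / 2 * (th + h / 2 / 3) + h / 2 * (th + h / 3) = th * h + h ^+ 2 / 4.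
  by field.
lra.
Qed.

Lemma bern (th h : R) : 0 <= th <= 1 ->
  (1 - th) * expR (- (th * h)) + th * expR ((1 - th) * h) <= expR (h ^+ 2 / 4).
Proof.
move=> th01.
wlog h0 : th h th01 / 0 <= h.
  move=> W; case: (lerP 0 h) => [|hn]; first exact: W.
  have th01' : 0 <= 1 - th <= 1 by case/andP: th01 => ? ?; apply/andP; split; lra.
  have := W (1 - th) (- h) th01'; rewrite oppr_ge0 ltW // => /(_ isT).
  have -> : (- h) ^+ 2 = h ^+ 2 by rewrite sqrrN.
  have -> : 1 - (1 - th) = th by ring.
  have -> : - ((1 - th) * - h) = (1 - th) * h by ring.
  have -> : th * - h = - (th * h) by ring.
  by rewrite addrC.
have e : (1 - th) * expR (- (th * h)) + th * expR ((1 - th) * h) =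
   expR (- (th * h)) * GG th h.
  rewrite /GG mulrDr mulrDl.
  have -> : (1 - th) * h = - (th * h) + h by ring.
  rewrite expRD; ring.
rewrite e.
apply: le_trans (_ : expR (- (th * h)) * expR (th * h + h ^+ 2 / 4) <= _).
  by rewrite ler_pM2l ?expR_gt0 // bern_pos.
by rewrite -expRD addrA addNr add0r.
Qed.

Lemma chord (a b y l : R) : a < b -> a <= y <= b ->
  expR (l * y) <= (b - y) / (b - a) * expR (l * a) + (y - a) / (b - a) * expR (l * b).
Proof.
move=> ab /andP[ay yb].
have ba : 0 < b - a by rewrite subr_gt0.
set tau := (b - y) / (b - a).
have t01 : 0 <= tau <= 1.
  apply/andP; split; first by rewrite /tau; apply: divr_ge0; lra.
  rewrite /tau ler_pdivrMr // mul1r; lra.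
have e1 : (y - a) / (b - a) = 1 - tau by rewrite /tau; field; rewrite gt_eqF.
have e2 : l * y = tau * (l * a) + (1 - tau) * (l * b).
  by rewrite /tau; field; rewrite gt_eqF.
by rewrite e1 e2 cvx.
Qed.

Lemma mgf (St : finType) (q y : St -> R) (a b l : R) :
  (forall t, 0 <= q t) -> \sum_t q t = 1 -> \sum_t q t * y t = 0 ->
  (forall t, 0 < q t -> a <= y t <= b) -> a < b ->
  \sum_t q t * expR (l * y t) <= expR (l ^+ 2 * (b - a) ^+ 2 / 4).
Proof.
move=> q0 q1 qy hab ab.
have ba : 0 < b - a by rewrite subr_gt0.
set A := expR (l * a); set B := expR (l * b).
have step : \sum_t q t * expR (l * y t) <=
   \sum_t q t * ((b - y t) / (b - a) * A + (y t - a) / (b - a) * B).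
  apply: ler_sum => t _.
  have := q0 t; rewrite le0r => /orP[/eqP->|qp]; first by rewrite !mul0r.
  by rewrite ler_wpM2l // chord // hab.
apply: (le_trans step).
have pt : forall t (F : R), (0 < q t -> 0 <= F) -> 0 <= q t * F.
  move=> t F hF; have := q0 t; rewrite le_eqVlt => /orP[/eqP<-|qp].
    by rewrite mul0r.
  apply: mulr_ge0; [exact: ltW | exact: hF].
have eS : \sum_t q t * ((b - y t) / (b - a) * A + (y t - a) / (b - a) * B)
   = \sum_t (q t * ((b * A - a * B) / (b - a)) + q t * y t * ((B - A) / (b - a))).
  by apply: eq_bigr => t _; field; rewrite gt_eqF.
rewrite eS big_split /= -!mulr_suml q1 qy mul0r addr0 mul1r.
have a0 : a <= 0.
  have : 0 <= \sum_t q t * (y t - a).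
    apply: sumr_ge0 => t _; apply: pt => qp.
    by rewrite subr_ge0; case/andP: (hab t qp).
  have -> : \sum_t q t * (y t - a) = \sum_t q t * y t - a * \sum_t q t.
    rewrite mulr_sumr -sumrB; apply: eq_bigr => t _; ring.
  rewrite qy q1; lra.
have b0 : 0 <= b.
  have : 0 <= \sum_t q t * (b - y t).
    apply: sumr_ge0 => t _; apply: pt => qp.
    by rewrite subr_ge0; case/andP: (hab t qp).
  have -> : \sum_t q t * (b - y t) = b * \sum_t q t - \sum_t q t * y t.
    rewrite mulr_sumr -sumrB; apply: eq_bigr => t _; ring.
  rewrite qy q1; lra.
set th := - a / (b - a).
have th01 : 0 <= th <= 1.
  apply/andP; split; first by rewrite /th; apply: divr_ge0; lra.
  by rewrite /th ler_pdivrMr // mul1r; lra.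
have := @bern th (l * (b - a)) th01.
have -> : (l * (b - a)) ^+ 2 = l ^+ 2 * (b - a) ^+ 2 by rewrite exprMn.
have -> : - (th * (l * (b - a))) = l * a by rewrite /th; field; rewrite gt_eqF.
have -> : (1 - th) * (l * (b - a)) = l * b by rewrite /th; field; rewrite gt_eqF.
suff -> : (b * A - a * B) / (b - a) = (1 - th) * A + th * B by [].
by rewrite /th; field; rewrite gt_eqF.
Qed.

Lemma chern1 (n : nat) (St : finType) (q y : 'I_n -> St -> R) (a b xi : R) :
  (forall i t, 0 <= q i t) -> (forall i, \sum_t q i t = 1) ->
  (forall i, \sum_t q i t * y i t = 0) ->
  (forall i t, 0 < q i t -> a <= y i t <= b) -> a < b -> 0 < xi -> (0 < n)%N ->
  \sum_(s : {ffun 'I_n -> St} | xi <= \sum_i y i (s i)) \prod_i q i (s i)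
    <= expR (- (xi ^+ 2 / (n%:R * (b - a) ^+ 2))).
Proof.
move=> q0 q1 qy hab ab xi0 n0.
have ba : 0 < b - a by rewrite subr_gt0.
have c2 : 0 < (b - a) ^+ 2 by rewrite exprn_gt0.
have np : 0 < n%:R :> R by rewrite ltr0n.
set l := 2 * xi / (n%:R * (b - a) ^+ 2).
have l0 : 0 <= l by rewrite /l ltW // divr_gt0 // ?mulr_gt0.
have Q0 : forall s : {ffun 'I_n -> St}, 0 <= \prod_i q i (s i).
  by move=> s; apply: prodr_ge0 => i _.
apply: le_trans (_ : \sum_(s : {ffun 'I_n -> St}) \prod_i q i (s i) *
    expR (l * (\sum_i y i (s i) - xi)) <= _).
  rewrite [X in _ <= X](bigID (fun s : {ffun 'I_n -> St} => xi <= \sum_i y i (s i))) /=.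
  apply: le_trans (_ : \sum_(s : {ffun 'I_n -> St} | xi <= \sum_i y i (s i))
      \prod_i q i (s i) * expR (l * (\sum_i y i (s i) - xi)) <= _).
    apply: ler_sum => s hs.
    rewrite -[X in X <= _]mulr1 ler_wpM2l //.
    by rewrite -expR0 ler_expR mulr_ge0 // subr_ge0.
  rewrite lerDl; apply: sumr_ge0 => s _; by rewrite mulr_ge0 // expR_ge0.
have e1 : forall s : {ffun 'I_n -> St}, \prod_i q i (s i) * expR (l * (\sum_i y i (s i) - xi))
   = expR (- (l * xi)) * \prod_i (q i (s i) * expR (l * y i (s i))).
  move=> s; rewrite big_split /= mulrBr expRD mulr_sumr expR_sum; ring.
rewrite (eq_bigr _ (fun s _ => e1 s)) -mulr_sumr.
rewrite -(bigA_distr_bigA (fun i t => q i t * expR (l * y i t))) /=.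
apply: le_trans (_ : expR (- (l * xi)) *
   \prod_(i < n) expR (l ^+ 2 * (b - a) ^+ 2 / 4) <= _).
  rewrite ler_wpM2l ?expR_ge0 //; apply: ler_prod => i _; apply/andP; split.
    by apply: sumr_ge0 => t _; rewrite mulr_ge0 ?expR_ge0.
  exact: (@mgf _ (q i) (y i) a b l (q0 i) (q1 i) (qy i) (hab i) ab).
rewrite prodr_const card_ord -expRM_natl -expRD ler_expR.
rewrite /l; apply: le_eqVlt_eq.
have nz : n%:R * (b - a) ^+ 2 != 0 by rewrite mulf_neq0 ?gt_eqF.
by field; rewrite ?nz ?gt_eqF.
Qed.

Lemma chern2 (n : nat) (St : finType) (q y : 'I_n -> St -> R) (a b xi : R) :
  (forall i t, 0 <= q i t) -> (forall i, \sum_t q i t = 1) ->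
  (forall i, \sum_t q i t * y i t = 0) ->
  (forall i t, 0 < q i t -> a <= y i t <= b) -> a < b -> 0 < xi ->
  \sum_(s : {ffun 'I_n -> St} | xi <= `|\sum_i y i (s i)|) \prod_i q i (s i)
    <= 2 * expR (- (xi ^+ 2 / (n%:R * (b - a) ^+ 2))).
Proof.
move=> q0 q1 qy hab ab xi0.
have Q0 : forall s : {ffun 'I_n -> St}, 0 <= \prod_i q i (s i).
  by move=> s; apply: prodr_ge0 => i _.
case: n q y q0 q1 qy hab Q0 => [|n] q y q0 q1 qy hab Q0.
  rewrite big_pred0; first by rewrite mulr_ge0 ?expR_ge0.
  by move=> s; rewrite big_ord0 normr0 leNgt xi0.
have h1 := @chern1 n.+1 St q y a b xi q0 q1 qy hab ab xi0 isT.
have h2 := @chern1 n.+1 St q (fun i t => - y i t) (- b) (- a) xi q0 q1.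
have e : - a - - b = b - a by rewrite opprK addrC.
rewrite e in h2.
have qy' : forall i, \sum_t q i t * - y i t = 0.
  by move=> i; under eq_bigr do rewrite mulrN; rewrite sumrN qy oppr0.
have hab' : forall i t, 0 < q i t -> - b <= - y i t <= - a.
  by move=> i t /(hab i t) /andP[? ?]; rewrite !lerN2; apply/andP.
have := h2 qy' hab'; rewrite ltrN2 => /(_ ab xi0 isT) {}h2.
apply: le_trans (_ : \sum_(s : {ffun 'I_n.+1 -> St} | xi <= \sum_i y i (s i)) \prod_i q i (s i)
   + \sum_(s : {ffun 'I_n.+1 -> St} | xi <= \sum_i - y i (s i)) \prod_i q i (s i) <= _); last first.
  by rewrite mulr2n mulrDl mul1r lerD.
rewrite !(big_mkcond (fun s : {ffun 'I_n.+1 -> St} => xi <= _)) -big_split /=.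
apply: ler_sum => s _.
rewrite sumrN.
case: ifP => h; last by case: ifP; case: ifP => // *; rewrite ?addr0 ?add0r ?Q0 // addr_ge0.
move: h; rewrite ler_normr => /orP[h|h]; rewrite h.
  by case: ifP => _; rewrite ?addr0 // lerDl.
by case: ifP => _; rewrite ?add0r // lerDr.
Qed.
End Ana.
Section Comb.
Variable R : realType.

Lemma Pr_ge0 (Omega : finType) (P : Omega -> R) (E : pred Omega) :
  (forall w, 0 <= P w) -> 0 <= Pr P E.
Proof. by move=> P0; apply: sumr_ge0. Qed.

Lemma Pr_le (Omega : finType) (P : Omega -> R) (E E' : pred Omega) :
  (forall w, 0 <= P w) -> (forall w, E w -> E' w) -> Pr P E <= Pr P E'.
Proof.
move=> P0 sub; rewrite /Pr [X in _ <= X](bigID E) /=.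
have -> : \sum_(w | E' w && E w) P w = \sum_(w | E w) P w.
  by apply: eq_bigl => w; case Ew: (E w); rewrite ?andbF ?andbT ?sub.
by rewrite lerDl sumr_ge0.
Qed.

Lemma decomp (Omega Zt St : finType) (n : nat) (P : Omega -> R)
  (Zr : 'I_n -> Omega -> Zt) (Sr : 'I_n -> Omega -> St)
  (D : pred {ffun 'I_n -> Zt}) (Phi : {ffun 'I_n -> Zt} -> {ffun 'I_n -> St} -> R) :
  \sum_(w | D (rvec Zr w)) P w * Phi (rvec Zr w) (rvec Sr w) =
  \sum_(z | D z) \sum_s Pr P [pred w | (rvec Zr w == z) && (rvec Sr w == s)] * Phi z s.
Proof.
rewrite (partition_big (fun w => rvec Zr w) D) //=.
apply: eq_bigr => z Dz.
rewrite (partition_big (fun w => rvec Sr w) xpredT) //=.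
apply: eq_bigr => s _.
rewrite /Pr big_distrl /=.
apply: eq_big => w.
  by case: eqP => [->|]; rewrite ?Dz ?andbF.
by move=> /andP[/andP[_ /eqP->] /eqP->].
Qed.

Lemma prod_sum1 (n : nat) (St : finType) (q : 'I_n -> St -> R) :
  (forall j, \sum_t q j t = 1) ->
  \sum_(s : {ffun 'I_n -> St}) \prod_j q j (s j) = 1.
Proof.
move=> q1; rewrite -(bigA_distr_bigA q) /=.
by rewrite (eq_bigr (fun _ => 1)) ?big1_eq // => j _; rewrite q1.
Qed.

Lemma marg1 (n : nat) (St : finType) (q : 'I_n -> St -> R) (i : 'I_n) (phi : St -> R) :
  (forall j, \sum_t q j t = 1) ->
  \sum_(s : {ffun 'I_n -> St}) (\prod_j q j (s j)) * phi (s i) = \sum_t q i t * phi t.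
Proof.
move=> q1.
set F := fun j t => if j == i then q j t * phi t else q j t.
have e : forall s : {ffun 'I_n -> St}, (\prod_j q j (s j)) * phi (s i) = \prod_j F j (s j).
  move=> s; rewrite (bigD1 i) //= [in RHS](bigD1 i) //= /F eqxx.
  rewrite mulrAC; congr (_ * _); by apply: eq_bigr => j /negbTE ->.
rewrite (eq_bigr _ (fun s _ => e s)) -(bigA_distr_bigA F) /=.
rewrite (bigD1 i) //= /F eqxx.
rewrite [X in _ * X](eq_bigr (fun _ => 1)) ?big1_eq ?mulr1 // => j /negbTE ji.
by rewrite (eq_bigr (fun t => q j t)) ?q1 // => t _; rewrite ji.
Qed.

Lemma card_emp (Zt : finType) (n : nat) (z : {ffun 'I_n -> Zt}) (a : Zt) :
  #|[set i | z i == a]|%:R = emp R z a * n%:R.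
Proof.
rewrite /emp ffunE.
case: n z => [|n] z.
  have : (#|[set i | z i == a]| <= #|'I_0|)%N by apply: max_card.
  by rewrite card_ord leqn0 => /eqP ->; rewrite !mul0r.
by rewrite divfK // pnatr_eq0.
Qed.

Lemma sum_by_type (Zt : finType) (n : nat) (z : {ffun 'I_n -> Zt}) (g : Zt -> R) :
  \sum_i g (z i) = \sum_a emp R z a * n%:R * g a.
Proof.
rewrite (partition_big (fun i => z i) xpredT) //=.
apply: eq_bigr => a _.
rewrite -card_emp.
rewrite (eq_bigr (fun _ => g a)); last by move=> i /eqP ->.
rewrite sumr_const mulr_natl; congr (_ *+ _).
by apply: eq_card => i; rewrite inE.
Qed.
End Comb.

Theorem lemma17 (R : realType) (Zt St : finType) (f : Zt -> St -> R) (n : nat)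
  (Omega : finType) (P : Omega -> R)
  (Zr : 'I_n -> Omega -> Zt) (Sr : 'I_n -> Omega -> St)
  (PZS : Zt -> St -> R) (a b : R) :
  is_pmf P ->
  (* each (Z_i, S_i) has the common joint law P_ZS *)
  (forall (i : 'I_n) (z : Zt) (s : St),
      Pr P [pred w | (Zr i w == z) && (Sr i w == s)] = PZS z s) ->
  (* Pr[S = s | Z = z] = prod_i Pr[S_i = s_i | Z_i = z_i] *)
  (forall (z : {ffun 'I_n -> Zt}) (s : {ffun 'I_n -> St}),
      0 < Pr P [pred w | rvec Zr w == z] ->
      cPr P [pred w | rvec Sr w == s] [pred w | rvec Zr w == z]
      = \prod_(i < n) cPr P [pred w | Sr i w == s i] [pred w | Zr i w == z i]) ->
  a < b ->
  (forall (z : Zt) (s : St), 0 < margZ PZS z -> 0 < condSZ PZS s z ->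
      a <= f z s - \sum_(s' : St) condSZ PZS s' z * f z s' <= b) ->
  forall (p : {ffun Zt -> R}) (xi : R),
    0 < Pr P [pred w | emp R (rvec Zr w) == p] ->
    0 < xi ->
    let C := [pred w | emp R (rvec Zr w) == p] in
    let sumf := fun w => \sum_(i < n) f (Zr i w) (Sr i w) in
    let mu := cExp P sumf C in
    cPr P [pred w | xi <= `|sumf w - mu|] C
      <= 2 * expR (- (xi ^+ 2 / (n%:R * (b - a) ^+ 2))).
Proof.
move=> [P0 P1] hZS hind ab hf p xi PC xi0; cbv zeta.
set C := [pred w | emp R (rvec Zr w) == p].
set sumf := fun w : Omega => \sum_(i < n) f (Zr i w) (Sr i w).
set mu := cExp P sumf C.
pose pi := fun z : {ffun 'I_n -> Zt} => Pr P [pred w | rvec Zr w == z].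
pose cond := fun (z : {ffun 'I_n -> Zt}) (s : {ffun 'I_n -> St}) =>
  \prod_i condSZ PZS (s i) (z i).
have hmarg : forall i z0, Pr P [pred w | Zr i w == z0] = margZ PZS z0.
  move=> i z0; rewrite /margZ -(eq_bigr _ (fun s _ => hZS i z0 s)) /Pr.
  by rewrite (partition_big (fun w => Sr i w) xpredT).
have PZS0 : forall (i : 'I_n) z0 s, 0 <= PZS z0 s.
  by move=> i z0 s; rewrite -(hZS i); exact: Pr_ge0.
have pi0 : forall z : {ffun 'I_n -> Zt}, 0 <= pi z by move=> z; exact: Pr_ge0.
have pcase : forall z : {ffun 'I_n -> Zt}, pi z = 0 \/ 0 < pi z.
  move=> z; case: (eqVneq (pi z) 0) => [->|nz]; [by left | right].
  by rewrite lt_def nz pi0.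
have pi_marg : forall z i, 0 < pi z -> 0 < margZ PZS (z i).
  move=> z i h; rewrite -(hmarg i); apply: lt_le_trans h _.
  by apply: Pr_le => // w /= /eqP <-; rewrite /rvec ffunE.
have hjoint : forall z s,
    Pr P [pred w | (rvec Zr w == z) && (rvec Sr w == s)] = pi z * cond z s.
  move=> z s; case: (pcase z) => [e0|pz].
    rewrite e0 mul0r; apply/eqP; rewrite eq_le Pr_ge0 // andbT -e0.
    by apply: Pr_le => // w /= /andP[].
  have := hind z s pz; rewrite /cPr.
  have -> : Pr P (predI [pred w | rvec Sr w == s] [pred w | rvec Zr w == z])
      = Pr P [pred w | (rvec Zr w == z) && (rvec Sr w == s)].
    by apply: eq_bigl => w; rewrite /= andbC.
  move=> /(congr1 (fun x => x * pi z)); rewrite divfK ?gt_eqF // => ->.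
  rewrite mulrC; congr (_ * _); apply: eq_bigr => i _.
  rewrite /condSZ -(hmarg i) -(hZS i); congr (_ / _).
  by apply: eq_bigl => w; rewrite /= andbC.
pose g := fun z0 => \sum_t condSZ PZS t z0 * f z0 t.
pose Mp := \sum_a p a * n%:R * g a.
have hcls : forall z : {ffun 'I_n -> Zt}, emp R z == p -> \sum_i g (z i) = Mp.
  by move=> z ep; rewrite sum_by_type (eqP ep).
have hcond1 : forall z : {ffun 'I_n -> Zt}, 0 < pi z -> forall i, \sum_t condSZ PZS t (z i) = 1.
  move=> z pz i; rewrite /condSZ -mulr_suml divff // gt_eqF //.
  exact: pi_marg.
have ePC : Pr P C = \sum_(z : {ffun 'I_n -> Zt} | emp R z == p) pi z.
  have := @decomp R Omega Zt St n P Zr Sr (fun z => emp R z == p) (fun _ _ => 1).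
  move=> /= de.
  transitivity (\sum_(w | emp R (rvec Zr w) == p) P w * 1).
    by rewrite /Pr; apply: eq_bigr => w _; rewrite mulr1.
  rewrite de; apply: eq_bigr => z ep.
  under eq_bigr do rewrite mulr1 hjoint.
  rewrite -mulr_sumr; case: (pcase z) => [->|pz]; first by rewrite mul0r.
  rewrite /cond (@prod_sum1 R n St (fun j t => condSZ PZS t (z j))) ?mulr1 //.
  exact: hcond1.
have eNum : \sum_(w | C w) P w * sumf w =
    (\sum_(z : {ffun 'I_n -> Zt} | emp R z == p) pi z) * Mp.
  have := @decomp R Omega Zt St n P Zr Sr (fun z => emp R z == p)
     (fun z s => \sum_i f (z i) (s i)).
  move=> /= de.
  transitivity (\sum_(w | emp R (rvec Zr w) == p)
      P w * \sum_i f (rvec Zr w i) (rvec Sr w i)).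
    apply: eq_bigr => w _; congr (_ * _); rewrite /sumf.
    by apply: eq_bigr => i _; rewrite !ffunE.
  rewrite de mulr_suml; apply: eq_bigr => z ep.
  under eq_bigr do rewrite hjoint -mulrA.
  rewrite -mulr_sumr; case: (pcase z) => [->|pz]; first by rewrite !mul0r.
  congr (_ * _); rewrite -(hcls z ep).
  under eq_bigr do rewrite mulr_sumr.
  rewrite exchange_big /=; apply: eq_bigr => i _.
  exact: (@marg1 R n St (fun j t => condSZ PZS t (z j)) i (f (z i)) (hcond1 z pz)).
have PC' : 0 < Pr P C by [].
have emu : mu = Mp.
  by rewrite /mu /cExp eNum -ePC mulrAC divff ?mul1r // gt_eqF.
rewrite /cPr ler_pdivrMr //.
have := @decomp R Omega Zt St n P Zr Sr (fun z => emp R z == p)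
   (fun z s => if xi <= `|\sum_i f (z i) (s i) - Mp| then 1 else 0).
move=> /= de.
have eE : Pr P (predI [pred w | xi <= `|sumf w - mu|] C) =
    \sum_(w | emp R (rvec Zr w) == p) P w *
      (if xi <= `|\sum_i f (rvec Zr w i) (rvec Sr w i) - Mp| then 1 else 0).
  rewrite /Pr (eq_bigl (fun w => C w && (xi <= `|sumf w - mu|))); last first.
    by move=> w; rewrite /= andbC.
  rewrite big_mkcondr; apply: eq_bigr => w _; rewrite emu.
  have -> : sumf w = \sum_i f (rvec Zr w i) (rvec Sr w i).
    by rewrite /sumf; apply: eq_bigr => i _; rewrite !ffunE.
  by case: ifP; rewrite ?mulr1 ?mulr0.
rewrite eE de ePC mulr_sumr; apply: ler_sum => z ep.
under eq_bigr do rewrite hjoint -mulrA.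
rewrite -mulr_sumr mulrC.
case: (pcase z) => [->|pz]; first by rewrite !mulr0.
apply: ler_wpM2r; first exact: pi0.
have -> : \sum_(s : {ffun 'I_n -> St}) cond z s * (if xi <= `|\sum_i f (z i) (s i) - Mp| then 1 else 0)
    = \sum_(s : {ffun 'I_n -> St} | xi <= `|\sum_i f (z i) (s i) - Mp|) cond z s.
  by rewrite [RHS]big_mkcond; apply: eq_bigr => s _; case: ifP; rewrite ?mulr1 ?mulr0.
pose q := fun (i : 'I_n) t => condSZ PZS t (z i).
pose y := fun (i : 'I_n) t => f (z i) t - g (z i).
have q0 : forall i t, 0 <= q i t.
  move=> i t; rewrite /q /condSZ divr_ge0 ?(PZS0 i) //.
  exact: ltW (pi_marg z i pz).
have q1 : forall i, \sum_t q i t = 1 by move=> i; exact: hcond1.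
have qy : forall i, \sum_t q i t * y i t = 0.
  move=> i; rewrite /y.
  under eq_bigr do rewrite mulrBr.
  by rewrite sumrB -mulr_suml q1 mul1r subrr.
have hab : forall i t, 0 < q i t -> a <= y i t <= b.
  by move=> i t qp; apply: hf => //; exact: pi_marg.
have := @chern2 R n St q y a b xi q0 q1 qy hab ab xi0.
apply: le_trans; apply: le_eqVlt_eq.
apply: eq_bigl => s.
by rewrite -(hcls z ep) -sumrB.
Qed.
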